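(* Let $G$ be a connected cograph. Then every minimum edge separator $F$ of $G$ satisfies $|F|=\delta(G)$, where $\delta(G)$ is the minimum degree of $G$.
   Context: A cograph is a graph that can be built from single vertices by repeatedly taking disjoint unions and joins; equivalently a graph with no induced path on four vertices. For a connected graph $G$, an edge separator is a set $F\subseteq E(G)$ such that $G-F=(V(G),E(G)\setminus F)$ is disconnected; a minimum edge separator is an edge separator of least size. *)

(* Defs.v *)
From mathcomp Require Import all_boot.
Set Implicit Arguments. Unset Strict Implicit. Unset Printing Implicit Defensive.

Definition simple_graph (T : finType) (e : rel T) : Prop :=
  symmetric e /\ irreflexive e.

Definition edges (T : finType) (e : rel T) : {set {set T}} :=
  [set [set x; y] | x in T, y in T & e x y].

Definition connected_graph (T : finType) (e : rel T) : Prop :=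
  (exists x : T, true) /\ forall x y : T, connect e x y.

Definition remove_edges (T : finType) (e : rel T) (F : {set {set T}}) : rel T :=
  fun x y => e x y && ([set x; y] \notin F).

Definition edge_separator (T : finType) (e : rel T) (F : {set {set T}}) : Prop :=
  F \subset edges e /\ ~ connected_graph (remove_edges e F).

Definition min_edge_separator (T : finType) (e : rel T) (F : {set {set T}}) : Prop :=
  edge_separator e F /\
  forall F' : {set {set T}}, edge_separator e F' -> #|F| <= #|F'|.

Definition degree (T : finType) (e : rel T) (x : T) : nat := #|[set y | e x y]|.

(* Minimum degree; for nonempty T every degree is < #|T|, so the seed #|T| is harmless. *)
Definition min_degree (T : finType) (e : rel T) : nat :=
  \big[minn/#|T|]_(x : T) degree e x.

Definition cograph (T : finType) (e : rel T) : Prop :=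
  forall a b c d : T,
    e a b -> e b c -> e c d -> ~~ e a c -> ~~ e b d -> ~~ e a d ->
    uniq [:: a; b; c; d] -> False.

(* Main.v *)
Require Import Defs.
From mathcomp Require Import all_boot zify.
Set Implicit Arguments. Unset Strict Implicit. Unset Printing Implicit Defensive.

Section S.
Variables (T : finType) (e : rel T).
Hypothesis esym : symmetric e.
Hypothesis eirr : irreflexive e.
Hypothesis cog : cograph e.

Definition near2 (x y : T) := (x == y) || e x y || [exists z, e x z && e z y].

Lemma near2_step a b c : e a b -> near2 b c -> near2 a c.
Proof.
move=> eab; rewrite /near2.
case: (eqVneq a c) => [->|nac] //=.
case eac: (e a c) => //=.
case/orP => [/orP[/eqP E|ebc]|/existsP[z /andP[ebz ezc]]].
- by rewrite E eac in eab.
- by apply/existsP; exists b; rewrite eab ebc.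
case eaz: (e a z); first by apply/existsP; exists z; rewrite eaz ezc.
case ebc: (e b c); first by apply/existsP; exists b; rewrite eab ebc.
exfalso; apply: (@cog a b z c eab ebz ezc (negbT eaz) (negbT ebc) (negbT eac)).
rewrite /= !inE !negb_or.
have nab : a != b by apply: contraTneq eab => ->; rewrite eirr.
have naz : a != z by apply: contraFneq eac => ->.
have nbz : b != z by apply: contraTneq ebz => ->; rewrite eirr.
have nbc : b != c by apply: contraFneq eac => <-.
have nzc : z != c by apply: contraTneq ezc => ->; rewrite eirr.
by rewrite nab naz nac nbz nbc nzc.
Qed.

Lemma near2_connect x y : connect e x y -> near2 x y.
Proof.
case/connectP => p; elim: p x y => [|z p IH] x y /=.
  by move=> _ ->; rewrite /near2 eqxx.
by case/andP => exz pz ->; exact: (near2_step exz (IH z _ pz erefl)).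
Qed.
Lemma out_exists (F : {set {set T}}) (S : {set T}) u0 :
  u0 \in S ->
  (forall u w, u \in S -> w \notin S -> e u w -> [set u; w] \in F) ->
  (forall v, #|F| < degree e v) ->
  exists2 u, u \in S & forall w, w \notin S -> ~~ e u w.
Proof.
move=> u0S cross hdeg.
case: (boolP [exists u in S, [forall w, (w \notin S) ==> ~~ e u w]]).
  case/exists_inP => u uS /forallP H; exists u => // w wS.
  exact: (implyP (H w) wS).
rewrite negb_exists_in => /forall_inP Hno.
pose out u := [set w | (w \notin S) && e u w].
have Hout1 u : u \in S -> 0 < #|out u|.
  move=> uS; have := Hno u uS; rewrite negb_forall => /existsP [w].
  rewrite negb_imply negbK => /andP[wS euw].
  by apply/card_gt0P; exists w; rewrite inE wS euw.
have Hdeg u : u \in S -> degree e u <= (#|S| - 1) + #|out u|.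
  move=> uS; rewrite /degree.
  have sub : [set y | e u y] \subset (S :\ u) :|: out u.
    apply/subsetP => y; rewrite !inE => euy.
    case yS: (y \in S); last by rewrite euy orbT.
    have : y != u by apply: contraTneq euy => ->; rewrite eirr.
    by move=> ->.
  apply: (leq_trans (subset_leq_card sub)).
  rewrite cardsU (cardsD1 u S) uS /=.
  lia.
pose P := [set p : T * T | (p.1 \in S) && (p.2 \in out p.1)].
have Hsum : \sum_(u in S) #|out u| = #|P|.
  transitivity (\sum_(u in S) \sum_(w in out u) 1).
    by apply: eq_bigr => u _; rewrite sum1_card.
  rewrite (pair_big_dep (fun u => u \in S) (fun u w => w \in out u) (fun _ _ => 1)) -sum1_card; apply: eq_bigl => p; by rewrite !inE.
have HP : #|P| <= #|F|.
  have inj : {in P &, injective (fun p : T * T => [set p.1; p.2])}.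
    move=> [a b] [c d]; rewrite !inE /= => /andP[aS /andP[bS _]] /andP[cS /andP[dS _]] E.
    have : a \in [set c; d] by rewrite -E !inE eqxx.
    rewrite !inE => /orP[/eqP ac|/eqP ad]; last by move: dS; rewrite -ad aS.
    subst c; have : b \in [set a; d] by rewrite -E !inE eqxx orbT.
    rewrite !inE => /orP[/eqP ba|/eqP bd]; last by rewrite bd.
    by rewrite ba aS in bS.
  rewrite -(card_in_imset inj); apply: subset_leq_card; apply/subsetP => s.
  case/imsetP => [[a b]]; rewrite !inE /= => /andP[aS /andP[bS eab]] ->.
  exact: cross.
set c := #|F| in hdeg HP *; set s := #|S| in Hdeg Hsum.
have s1 : 0 < s by apply/card_gt0P; exists u0.
have Hlb : \sum_(u in S) maxn 1 (c.+2 - s) <= \sum_(u in S) #|out u|.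
  apply: leq_sum => u uS; have := Hout1 u uS; have := Hdeg u uS; have := hdeg u.
  lia.
rewrite sum_nat_const -/s Hsum in Hlb.
have := leq_trans Hlb HP; clear -s1.
case: (leqP s c) => sc.
  have -> : maxn 1 (c.+2 - s) = c.+2 - s by lia.
  set k := c.+2 - s; have : s + k = c.+2 by rewrite /k; lia.
  have : 2 <= k by rewrite /k; lia.
  nia.
lia.
Qed.
End S.

Theorem lemma6 (T : finType) (e : rel T) :
  simple_graph e -> cograph e -> connected_graph e ->
  forall F : {set {set T}}, min_edge_separator e F -> #|F| = min_degree e.
Proof.
move=> [esym eirr] cog [[x0 _] conn] F [[Fsub Fnc] Fmin].
set e' := remove_edges e F.
have [x [y nxy]] : exists x y, ~~ connect e' x y.
  case: (boolP [forall a, [forall b, connect e' a b]]) => [/forallP H|].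
    exfalso; apply: Fnc; split; first by exists x0.
    by move=> a b; exact: (forallP (H a) b).
  rewrite negb_forall => /existsP[a]; rewrite negb_forall => /existsP[b] h.
  by exists a, b.
have xy : x != y by apply: contraNneq nxy => ->; rewrite connect0.
have upper v : #|F| <= degree e v.
  have [w nwv] : exists w, w != v.
    case: (eqVneq x v) => [xv|xv]; last by exists x.
    by exists y; rewrite -xv eq_sym.
  pose F' := [set [set v; z] | z in [set z | e v z]].
  have cardF' : #|F'| = degree e v.
    rewrite /F' card_in_imset // => a b; rewrite !inE => eva evb E.
    have : a \in [set v; b] by rewrite -E !inE eqxx orbT.
    rewrite !inE => /orP[/eqP av|/eqP //].
    by move: eva; rewrite av eirr.
  rewrite -cardF'; apply: Fmin; split.
    apply/subsetP => s /imsetP[z]; rewrite inE => evz ->.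
    by rewrite /edges; apply/imset2P; exists v z; rewrite ?inE.
  case=> _ H; have := H v w; case/connectP => [[|z p]] /=.
    by move=> _ E; rewrite E eqxx in nwv.
  case/andP => + _; rewrite /remove_edges => /andP[evz].
  by move=> /negP[]; apply: imset_f; rewrite inE.
have [v hv] : exists v, degree e v <= #|F|.
  case: (boolP [exists v, degree e v <= #|F|]) => [/existsP[v hv]|]; first by exists v.
  rewrite negb_exists => /forallP hall; exfalso.
  have hall' w : #|F| < degree e w by rewrite ltnNge hall.
  pose S := [set z | connect e' x z].
  have xS : x \in S by rewrite inE connect0.
  have yS : y \notin S by rewrite inE.
  have cross u w : u \in S -> w \notin S -> e u w -> [set u; w] \in F.
    move=> uS wS euw; apply/negPn/negP => nF.
    move: wS; rewrite !inE => /negP; apply.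
    rewrite inE in uS; apply: (connect_trans uS); apply: connect1.
    by rewrite /e' /remove_edges euw nF.
  have [u uS Hu] := out_exists eirr xS cross hall'.
  have cross' u' w : u' \in ~: S -> w \notin ~: S -> e u' w -> [set u'; w] \in F.
    rewrite !inE negbK => u'S wS euw.
    by rewrite setUC; apply: cross => //; rewrite ?inE // esym.
  have ycS : y \in ~: S by rewrite inE.
  have [v vS Hv] := out_exists eirr ycS cross' hall'.
  have := near2_connect eirr cog (conn u v); rewrite /near2.
  case/orP => [/orP[/eqP uv|euv]|/existsP[z /andP[euz ezv]]].
  - by move: vS; rewrite -uv inE uS.
  - by have := Hu v; rewrite inE in vS; rewrite vS euv => /(_ isT).
  case zS: (z \in S).
    by have := Hv z; rewrite inE zS esym ezv => /(_ isT).
  by have := Hu z; rewrite zS euz => /(_ isT).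
apply/eqP; rewrite eqn_leq; apply/andP; split.
  rewrite /min_degree; apply: (big_ind (fun m => #|F| <= m)).
  - apply: leq_trans (upper x0) _; exact: max_card.
  - by move=> a b ha hb; rewrite leq_min ha hb.
  - by move=> i _; exact: upper.
apply: leq_trans hv; rewrite /min_degree.
have : v \in index_enum T by rewrite mem_index_enum.
elim: (index_enum T) => [|a l IH] //; rewrite inE big_cons /=.
case/orP => [/eqP <-|/IH h]; first exact: geq_minl.
exact: leq_trans (geq_minr _ _) h.
Qed.
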